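(* Let $\beta$ be an ordered partition of $N$. For every $x\in X^\beta$ we have $\bar W^{\beta(x)}x\subseteq W^\beta$, and the map $\bigsqcup_{x\in X^\beta}\bar W^{\beta(x)}\to W^\beta$, $w\mapsto wx$ (for $w$ in the copy indexed by $x$), is a bijection.
   Context: Fix $N\ge2$. $\bar P=\bigoplus_{i=1}^N\mathbb Z\epsilon_i$ with $(\epsilon_i,\epsilon_j)=\delta_{ij}$; $\bar R=\{\alpha_{ij}=\epsilon_i-\epsilon_j:i\ne j\}$, $\bar R_+=\{\alpha_{ij}:i<j\}$, $\alpha_i=\alpha_{i,i+1}$, $\bar\Pi=\{\alpha_1,\dots,\alpha_{N-1}\}$; $\bar P_-=\{\eta\in\bar P:(\eta,\alpha)\le0\ \forall\alpha\in\bar R_+\}$. $\bar W=\mathfrak S_N$ acts by permuting indices; $W=\bar W\ltimes\bar P$ with elements $wt_\eta$, $wt_\eta w^{-1}=t_{w(\eta)}$. Affine roots (with formal $\delta$): $R=\{\bar\alpha+k\delta:\bar\alpha\in\bar R,k\in\mathbb Z\}$, $R_+=\{\bar\alpha+k\delta:\bar\alpha\in\bar R_+,k\ge0\}\cup\{-\bar\alpha+k\delta:\bar\alpha\in\bar R_+,k>0\}$, $R_-=R\setminus R_+$; $W$ acts on $R$ by $w(\bar\alpha+k\delta)=w(\bar\alpha)+k\delta$, $t_\eta(\bar\alpha+k\delta)=\bar\alpha+(k-(\eta,\bar\alpha))\delta$; $l(w)=\#(R_+\cap w^{-1}(R_-))$. An ordered partition $\gamma$ of $N$ gives blocks of consecutive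 indices of sizes $\gamma_1,\dots,\gamma_r$; $\bar R_\gamma=\{\alpha_{ij}:i,j\text{ in the same block}\}$, $\bar R_{\gamma,+}=\bar R_\gamma\cap\bar R_+$, $\bar\Pi_\gamma=\bar\Pi\cap\bar R_\gamma$, $\bar W_\gamma$ generated by $s_\alpha$, $\alpha\in\bar\Pi_\gamma$; $W^\gamma=\{w\in W:l(wu)\ge l(w)\ \forall u\in\bar W_\gamma\}$, $\bar W^\gamma=W^\gamma\cap\bar W$. For $w\in W$, $\beta(w)$ denotes the ordered partition of $N$ with $\bar\Pi_{\beta(w)}=\bar\Pi\cap w(\bar R_{\beta,+})$. For $w\in\bar W^\beta$, $\eta_w\in\bar P_-$ is defined by $(\eta_w,\epsilon_1)=0$ and $(\eta_w,\alpha_i)=-1$ if $\alpha_i\in w(\bar R_+\setminus\bar R_{\beta,+})$, $0$ otherwise; $\bar P_-(w)=\{\eta+\eta_w:\eta\in\bar P_-\}$; $X^\beta=\{t_\eta w:w\in\bar W^\beta,\eta\in\bar P_-(w)\}$. *)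

(* Defs.v *)
From HB Require Import structures.
From mathcomp Require Import all_boot all_order all_algebra all_fingroup.
From mathcomp Require Import finmap.
From mathcomp Require Import boolp classical_sets cardinality.
Set Implicit Arguments. Unset Strict Implicit. Unset Printing Implicit Defensive.
Import GRing.Theory Num.Theory.

Local Open Scope fset_scope.
Local Open Scope ring_scope.

(* Indices 1..N of the paper are 0..N-1 here (type 'I_N). *)

Definition ordpart (N : nat) (g : seq nat) : bool :=
  all (fun m => 0 < m)%N g && (sumn g == N).

Definition psums (g : seq nat) : seq nat :=
  [seq sumn (take k.+1 g) | k <- iota 0 (size g)].

(* block number of the (0-based) index i: blocks are consecutive intervals *)
Definition blk (g : seq nat) (i : nat) : nat := count (fun c => c <= i)%N (psums g).

Definition sameblk (g : seq nat) (i j : nat) : bool := blk g i == blk g j.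

Definition weight (N : nat) := {ffun 'I_N -> int}.

(* the element t_eta w is represented by the pair (eta, w) *)
Definition Welt (N : nat) := (weight N * {perm 'I_N})%type.

Definition tw (N : nat) (eta : weight N) (w : {perm 'I_N}) : Welt N := (eta, w).

(* w(mu) for w in Wbar: w(eps_i) = eps_{w i} *)
Definition wact_wt (N : nat) (w : {perm 'I_N}) (mu : weight N) : weight N :=
  [ffun a => mu ((w^-1)%g a)].

(* (t_eta w)(t_mu v) = t_{eta + w(mu)} (w o v);  mathcomp: (v * w)%g x = w (v x) *)
Definition Wmul (N : nat) (x y : Welt N) : Welt N :=
  ([ffun a => x.1 a + wact_wt x.2 y.1 a], (y.2 * x.2)%g).

Definition Wbar (N : nat) (w : {perm 'I_N}) : Welt N := (0, w).

(* (i, j, k) stands for eps_i - eps_j + k delta *)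
Definition aroot (N : nat) := ('I_N * 'I_N * int)%type.

Definition is_root (N : nat) (a : aroot N) : bool := a.1.1 != a.1.2.

Definition is_pos (N : nat) (a : aroot N) : bool :=
  is_root a &&
  (((a.1.1 < a.1.2)%N && (0 <= a.2)) || ((a.1.2 < a.1.1)%N && (0 < a.2))).

Definition is_neg (N : nat) (a : aroot N) : bool := is_root a && ~~ is_pos a.

(* (t_eta w)(eps_i - eps_j + k delta) = eps_{w i} - eps_{w j} + (k - (eta, eps_{w i} - eps_{w j})) delta *)
Definition Wact (N : nat) (x : Welt N) (a : aroot N) : aroot N :=
  (x.2 a.1.1, x.2 a.1.2, a.2 - (x.1 (x.2 a.1.1) - x.1 (x.2 a.1.2))).

Definition Wlen (N : nat) (x : Welt N) : nat :=
  size (fset_set (fun a : aroot N => is_pos a /\ is_neg (Wact x a))).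

(* the simple root alpha_i = eps_i - eps_{i+1} is the pair (i, j) with val j = (val i).+1 *)
Definition is_simple (N : nat) (i j : 'I_N) : bool := (val j == (val i).+1)%N.

Definition Pi_gamma (N : nat) (g : seq nat) : {set 'I_N * 'I_N} :=
  [set p | is_simple p.1 p.2 && sameblk g p.1 p.2].

Definition Wbar_gamma (N : nat) (g : seq nat) : {set {perm 'I_N}} :=
  <<[set tperm p.1 p.2 | p in Pi_gamma N g]>>%g.

Definition in_Wup (N : nat) (g : seq nat) (x : Welt N) : Prop :=
  forall u, u \in Wbar_gamma N g -> (Wlen x <= Wlen (Wmul x (Wbar u)))%N.

Definition in_Wbarup (N : nat) (g : seq nat) (w : {perm 'I_N}) : Prop :=
  in_Wup g (Wbar w).

(* the ordered partition of N whose set of "internal" simple roots alpha_i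
   (i < N-1) is given by the predicate P: blocks are cut after i exactly when ~~ P i *)
Definition part_of_pred (N : nat) (P : nat -> bool) : seq nat :=
  pairmap (fun a b => b - a)%N 0%N
    ([seq i.+1 | i <- iota 0 N.-1 & ~~ P i] ++ [:: N]).

(* alpha_i in x(Rbar_{beta,+}) *)
Definition simple_in_image (N : nat) (b : seq nat) (x : Welt N) (i : nat) : bool :=
  [exists a : 'I_N, exists c : 'I_N,
     [&& (a < c)%N, sameblk b a c &
        let r := Wact x (a, c, 0) in
        [&& val r.1.1 == i, val r.1.2 == i.+1 & r.2 == 0]]].

(* beta(x): Pibar_{beta(x)} = Pibar cap x(Rbar_{beta,+}) *)
Definition beta_of (N : nat) (b : seq nat) (x : Welt N) : seq nat :=
  part_of_pred N (simple_in_image b x).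

(* alpha_i in w(Rbar_+ \ Rbar_{beta,+}) *)
Definition simple_in_compl (N : nat) (b : seq nat) (w : {perm 'I_N}) (i : nat) : bool :=
  [exists a : 'I_N, exists c : 'I_N,
     [&& (a < c)%N, ~~ sameblk b a c, val (w a) == i & val (w c) == i.+1]].

(* eta_w: (eta_w, eps_1) = 0 and (eta_w, alpha_i) = -1 or 0; i.e.
   eta_w(k) = #{ i < k | alpha_i in w(Rbar_+ \ Rbar_{beta,+}) } *)
Definition eta_w (N : nat) (b : seq nat) (w : {perm 'I_N}) : weight N :=
  [ffun k : 'I_N => (count (simple_in_compl b w) (iota 0 k))%:Z].

Definition in_Pminus (N : nat) (eta : weight N) : Prop :=
  forall i j : 'I_N, (i < j)%N -> eta i - eta j <= 0.

Definition in_Pminus_w (N : nat) (b : seq nat) (w : {perm 'I_N}) (mu : weight N) : Prop :=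
  exists eta : weight N, in_Pminus eta /\ mu = [ffun k => eta k + eta_w b w k].

Definition in_X (N : nat) (b : seq nat) (x : Welt N) : Prop :=
  exists (w : {perm 'I_N}) (eta : weight N),
    [/\ in_Wbarup b w, in_Pminus_w b w eta & x = tw eta w].

(* Main.v *)
Require Import Defs.
From HB Require Import structures.
From mathcomp Require Import all_boot all_order all_algebra all_fingroup.
From mathcomp Require Import finmap.
From mathcomp Require Import boolp classical_sets cardinality.
From mathcomp Require Import zify.
From Stdlib Require Import Lia.
Set Implicit Arguments. Unset Strict Implicit. Unset Printing Implicit Defensive.
Import Order.TTheory GRing.Theory Num.Theory.

Local Open Scope ring_scope.

Lemma blk_mono (g : seq nat) (i j : nat) : (i <= j)%N -> (blk g i <= blk g j)%N.
Proof. by move=> hij; rewrite /blk; apply: sub_count => c /= H; exact: leq_trans H hij. Qed.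

Lemma is_pos_nat N (i j : 'I_N) (k : nat) :
  is_pos (i, j, Posz k) = (i != j) && ((0 < k)%N || (i < j)%N).
Proof.
rewrite /is_pos /is_root /=; case: eqP => //= /eqP ij.
rewrite ltz_nat.
case: (ltngtP i j) => h /=; rewrite ?orbT ?orbF ?andbT ?andbF //.
by move: ij; rewrite (val_inj h) eqxx.
Qed.

Lemma is_pos_root N (p q : 'I_N) (m : int) : p != q ->
  is_pos (p, q, m) = ((p < q)%N && (0 <= m)) || ((q < p)%N && (0 < m)).
Proof. by rewrite /is_pos /is_root /= => ->. Qed.

Lemma is_neg_root N (p q : 'I_N) (m : int) : p != q ->
  is_neg (p, q, m) = ~~ is_pos (p, q, m).
Proof. by rewrite /is_neg /is_root /= => ->. Qed.

Lemma Wmul_Wbar_r N (y : Welt N) (u : {perm 'I_N}) :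
  Wmul y (Wbar u) = (y.1, (u * y.2)%g).
Proof.
rewrite /Wmul /Wbar /=; congr pair; apply/ffunP => a.
by rewrite !ffunE addr0.
Qed.


Definition box N B := ('I_N * 'I_N * 'I_B.+1)%type.
Definition emb N B (t : box N B) : aroot N := (t.1.1, t.1.2, Posz (val t.2)).
Definition Sb N B (y : Welt N) : {set box N B} :=
  [set t | is_pos (emb t) && is_neg (Wact y (emb t))].

Lemma emb_inj N B : injective (@emb N B).
Proof.
move=> [[i j] k] [[i' j'] k'] [/= -> -> e]; congr pair; exact: val_inj.
Qed.

Lemma S_bound N (y : Welt N) (a : aroot N) : is_pos a -> is_neg (Wact y a) ->
  0 <= a.2 <= y.1 (y.2 a.1.1) - y.1 (y.2 a.1.2).
Proof.
case: a => [[i j] k] /=; rewrite /is_pos /is_neg /is_root /Wact /=.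
case/andP=> ij Hp /andP[_].
rewrite is_pos_root ?(inj_eq perm_inj) // negb_or !negb_and -!ltNge -!leNgt.
have k0 : 0 <= k.
  by case/orP: Hp => /andP[_ h] //; apply: ltW.
rewrite k0 /=; case/andP.
case: (ltngtP (y.2 i) (y.2 j)) => h /= h1 h2.
- by move: h1; rewrite subr_lt0 => /ltW.
- by move: h2; rewrite subr_le0.
- by move: ij; rewrite -(inj_eq (@perm_inj _ y.2)) (val_inj h) eqxx.
Qed.

Lemma Wlen_box N B (y : Welt N) : (forall p q, y.1 p - y.1 q <= (B%:Z)) ->
  Wlen y = #|Sb B y|.
Proof.
move=> HB.
have E : (fun a : aroot N => is_pos a /\ is_neg (Wact y a)) =
         [set` [fset emb t | t in Sb B y]%fset]%classic.
  apply/seteqP; split => a /=.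
    move=> [Hp Hn]; have /andP[h0 h1] := S_bound Hp Hn.
    move: Hp Hn h0 h1; case: a => [[i j] [n|n]] //= Hp Hn _ h1.
    have hn : (n < B.+1)%N.
      by rewrite ltnS -(@lez_nat n B); apply: le_trans h1 (HB _ _).
    apply/imfsetP; exists (i, j, Ordinal hn) => //.
    by rewrite inE /emb /= Hp Hn.
  by case/imfsetP => t; rewrite inE => /andP[h1 h2] ->.
rewrite /Wlen E set_fsetK card_imfset //=; last exact: emb_inj.
by rewrite cardE.
Qed.


Lemma exB N (m : weight N) : exists B : nat, forall p q, m p - m q <= B%:Z.
Proof.
exists (\sum_q `|m q| + \sum_q `|m q|)%N => p q.
have hp : (`|m p| <= \sum_q `|m q|)%N by rewrite (bigD1 p) //= leq_addr.
have hq : (`|m q| <= \sum_q `|m q|)%N by rewrite (bigD1 q) //= leq_addr.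
apply: le_trans (ler_norm _) _.
apply: le_trans (ler_normB _ _) _.
rewrite -!abszE PoszD lerD // lez_nat //.
Qed.

Definition klt N (y : Welt N) (a c : 'I_N) : bool :=
  (y.1 (y.2 a) < y.1 (y.2 c)) || ((y.1 (y.2 a) == y.1 (y.2 c)) && (y.2 a < y.2 c)%N).

Lemma klt_posE N (y : Welt N) (i j : 'I_N) : i != j ->
  is_pos (Wact y (i, j, 0)) = klt y i j.
Proof.
move=> ij; rewrite /Wact /klt /=.
have vij : y.2 i != y.2 j by rewrite (inj_eq (@perm_inj _ y.2)).
rewrite is_pos_root // sub0r opprB subr_ge0 subr_gt0.
case: (ltngtP (y.2 i) (y.2 j)) => h /=.
- by rewrite orbF andbT le_eqVlt orbC.
- by rewrite andbF orbF.
- by move: vij; rewrite (val_inj h) eqxx.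
Qed.

Lemma klt_trans N (y : Welt N) : transitive (klt y).
Proof.
move=> b a c; rewrite /klt.
case/orP=> [h1|/andP[/eqP e1 h1]]; case/orP=> [h2|/andP[/eqP e2 h2]].
- by rewrite (lt_trans h1 h2).
- by rewrite -e2 h1.
- by rewrite e1 h2.
- by rewrite e1 e2 eqxx (ltn_trans h1 h2) orbT.
Qed.

Lemma klt_irr N (y : Welt N) a : klt y a a = false.
Proof. by rewrite /klt ltxx ltnn andbF. Qed.

Lemma klt_total N (y : Welt N) a c : a != c -> klt y a c || klt y c a.
Proof.
move=> ac; rewrite /klt.
have vac : y.2 a != y.2 c by rewrite (inj_eq (@perm_inj _ y.2)).
case: (ltgtP (y.1 (y.2 a)) (y.1 (y.2 c))) => //= e.
rewrite ?e ?eqxx /=; case: (ltngtP (y.2 a) (y.2 c)) => // h; rewrite ?orbT //.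
by move: vac; rewrite (val_inj h) eqxx.
Qed.

Lemma chain N (R : rel 'I_N) (a c : 'I_N) : (a <= c)%N -> reflexive R -> transitive R ->
  (forall d d' : 'I_N, val d' = (val d).+1 -> (a <= d)%N -> (d' <= c)%N -> R d d') -> R a c.
Proof.
move=> ac Rr Rt Hs.
suff H : forall k (c' : 'I_N), val c' = (a + k)%N -> (c' <= c)%N -> R a c'.
  by apply: (H (c - a)%N) => //; rewrite subnKC.
elim=> [|k IH] c' e c'c.
  by rewrite addn0 in e; rewrite (val_inj e).
have hk : (a + k < N)%N by apply: leq_ltn_trans (ltn_ord c'); rewrite e addnS.
apply: (Rt (Ordinal hk)); first by apply: IH => //=; apply: leq_trans c'c; rewrite e addnS.
apply: Hs => //=; first by rewrite e addnS.
exact: leq_addr.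
Qed.

Lemma Wg_blk N g (u : {perm 'I_N}) : u \in Wbar_gamma N g -> forall a, blk g (u a) = blk g a.
Proof.
case/gen_prodgP=> n [c Hc ->].
apply: (big_ind (fun s : {perm 'I_N} => forall a, blk g (s a) = blk g a)).
- by move=> a; rewrite perm1.
- by move=> s t Hs Ht a; rewrite permM Ht Hs.
move=> i _; have := Hc i; case/imsetP=> p; rewrite inE => /andP[_ /eqP sb] -> a.
by case: tpermP => [->|->|//]; rewrite sb.
Qed.

Lemma Wact_mulr N (y : Welt N) (u : {perm 'I_N}) i j k :
  Wact (y.1, (u * y.2)%g) (i, j, k) = Wact y (u i, u j, k).
Proof. by rewrite /Wact /= !permM. Qed.

Lemma is_neg_Wact N (y : Welt N) i j k : i != j ->
  is_neg (Wact y (i, j, k)) = ~~ is_pos (Wact y (i, j, k)).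
Proof. by move=> ij; rewrite /Wact is_neg_root // (inj_eq (@perm_inj _ y.2)). Qed.

Lemma adj_tperm_lt N (d d' i j : 'I_N) : (d' : nat) = (d : nat).+1 -> (i < j)%N ->
  ~~ ((i == d) && (j == d')) -> (tperm d d' i < tperm d d' j)%N.
Proof.
move=> e ij nd.
have vne : forall x z : 'I_N, x <> z -> (x : nat) <> z by move=> x z h h'; apply: h; apply: val_inj.
case: tpermP => [ei|ei|hi1 hi2]; case: tpermP => [ej|ej|hj1 hj2];
  rewrite ?ei ?ej in ij nd *; rewrite ?eqxx ?andbT ?andTb in nd.
all: try (have := vne _ _ hi1); try (have := vne _ _ hi2);
     try (have := vne _ _ hj1); try (have := vne _ _ hj2); try lia.
Qed.

Lemma LemA1 N g (y : Welt N) :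
  (forall a c : 'I_N, (a < c)%N -> sameblk g a c -> klt y a c) -> in_Wup g y.
Proof.
move=> Hs u Hu; rewrite Wmul_Wbar_r.
have [B HB] := exB y.1.
rewrite (Wlen_box HB) (@Wlen_box _ B (y.1, (u * y.2)%g)) //.
pose f := fun t : box N B => ((u^-1)%g t.1.1, (u^-1)%g t.1.2, t.2) : box N B.
have finj : injective f.
  by move=> [[i j] k] [[i' j'] k'] [/perm_inj -> /perm_inj -> ->].
rewrite -(card_imset _ finj); apply: subset_leq_card; apply/fintype.subsetP => t'.
case/imsetP => t Ht ->; move: Ht; rewrite !inE; case: t => [[i j] [[|n] hn]].
  rewrite /emb /= => /andP[Hp Hn].
  rewrite Wact_mulr !permKV Hn andbT.
  move: Hp; rewrite !is_pos_nat /= => /andP[nij ij].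
  apply/andP; split; first by rewrite (inj_eq (@perm_inj _ _)).
  case: (boolP (sameblk g i j)) => sb.
    by move: Hn; rewrite is_neg_Wact // klt_posE // Hs.
  have bij : (blk g i < blk g j)%N.
    by rewrite ltn_neqAle sb blk_mono // ltnW.
  have ei : blk g ((u^-1)%g i) = blk g i by rewrite -{2}(permKV u i) (Wg_blk Hu).
  have ej : blk g ((u^-1)%g j) = blk g j by rewrite -{2}(permKV u j) (Wg_blk Hu).
  rewrite ltnNge; apply/negP => h.
  by have := blk_mono g h; rewrite ei ej leqNgt bij.
rewrite /emb /= => /andP[Hp Hn].
rewrite Wact_mulr !permKV Hn andbT.
move: Hp; rewrite !is_pos_nat /= => /andP[nij _].
by rewrite (inj_eq (@perm_inj _ _)) nij.
Qed.

Lemma LemA2 N g (y : Welt N) : in_Wup g y ->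
  forall a c : 'I_N, (a < c)%N -> sameblk g a c -> klt y a c.
Proof.
move=> Hm.
have adj : forall d d' : 'I_N, (d' : nat) = (d : nat).+1 -> sameblk g d d' -> klt y d d'.
  move=> d d' e sb; apply/negPn/negP => nk.
  have dd' : d != d'.
    by apply/eqP => h; move: e; rewrite h; lia.
  have kl : klt y d' d by have := klt_total y dd'; rewrite (negbTE nk).
  pose u := tperm d d'.
  have Hu : u \in Wbar_gamma N g.
    by apply: mem_gen; apply/imsetP; exists (d, d'); rewrite // inE /is_simple /= sb andbT; apply/eqP.
  have := Hm u Hu; rewrite Wmul_Wbar_r; have [B HB] := exB y.1.
  rewrite (Wlen_box HB) (@Wlen_box _ B (y.1, (u * y.2)%g)) //.
  apply/negP; rewrite -ltnNge.
  pose h := fun t : box N B => (u t.1.1, u t.1.2, t.2) : box N B.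
  have hinj : injective h.
    by move=> [[i j] k] [[i' j'] k'] [/perm_inj -> /perm_inj -> ->].
  rewrite -(card_imset _ hinj); apply: proper_card; apply/properP; split.
    apply/fintype.subsetP => t'; case/imsetP => t Ht ->; move: Ht; rewrite !inE.
    case: t => [[i j] [[|n] hn]]; rewrite /emb /= => /andP[Hp Hn];
      rewrite Wact_mulr in Hn; rewrite Hn andbT;
      move: Hp; rewrite !is_pos_nat /= => /andP[nij ij];
      (apply/andP; split; first by rewrite (inj_eq (@perm_inj _ _))) => //.
    case: (boolP ((i == d) && (j == d'))) => [/andP[/eqP ei /eqP ej]|nd]; last exact: adj_tperm_lt.
    exfalso; move: Hn; rewrite ei ej /u tpermL tpermR is_neg_Wact 1?eq_sym //.
    by rewrite klt_posE 1?eq_sym // kl.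
  pose t0 : box N B := (d, d', ord0); exists t0. rewrite !inE /t0 /emb /= is_pos_nat dd' e leqnn orbT /=.
    by rewrite is_neg_Wact // klt_posE // (negbTE nk).
  apply/imsetP => [[t Ht et]]; move: Ht.
  have -> : t = (d', d, ord0).
    move: et; case: t => [[i j] k] [ei ej ek].
    by rewrite ek -(tpermK d d' i) -(tpermK d d' j) -/u -ei -ej /u tpermL tpermR.
  by rewrite inE /emb /= is_pos_nat e ltnn ltnNge leqnSn andbF.
move=> a c ac sb.
have : (a == c) || klt y a c.
  apply: (@chain N (fun a c => (a == c) || klt y a c)) => //.
  - exact: ltnW.
  - by move=> x; rewrite eqxx.
  - move=> b a' c' /orP[/eqP->|h1] // /orP[/eqP<-|h2]; rewrite ?h1 ?(klt_trans h1 h2) ?orbT //.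
  move=> d d' e ad d'c; apply/orP; right; apply: adj => //.
  have h1 := blk_mono g ad.
  have h2 := blk_mono g (leqnSn d); rewrite -e in h2.
  have h3 := blk_mono g d'c.
  move: sb; rewrite /sameblk => /eqP sb.
  apply/eqP/anti_leq; rewrite h2 /=; rewrite sb in h1; exact: leq_trans h3 h1.
case/orP => // /eqP e; by rewrite e ltnn in ac.
Qed.

Lemma LemA N g (y : Welt N) :
  in_Wup g y <-> (forall a c : 'I_N, (a < c)%N -> sameblk g a c -> klt y a c).
Proof. by split; [exact: LemA2 | exact: LemA1]. Qed.


Local Close Scope ring_scope.

Lemma take_pairmap (x0 : nat) (s : seq nat) k : path leq x0 s -> (k < size s)%N ->
  sumn (take k.+1 (pairmap (fun a b => b - a)%N x0 s)) = (nth 0%N s k - x0)%N.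
Proof.
elim: s x0 k => [|y s IH] x0 [|k] //= /andP[hxy hp] hk.
  by rewrite take0 addn0.
rewrite (IH y k hp hk).
have : (y <= nth 0%N s k)%N.
  move: hp; rewrite (path_sortedE leq_trans) => /andP[/all_nthP H _]; exact: H.
lia.
Qed.

Lemma psums_pairmap (s : seq nat) : path leq 0%N s ->
  psums (pairmap (fun a b => b - a)%N 0%N s) = s.
Proof.
move=> hp; rewrite /psums size_pairmap -[RHS](mkseq_nth 0%N s) /mkseq.
apply/eq_in_map => k; rewrite mem_iota => /andP[_ hk].
by rewrite take_pairmap // subn0.
Qed.

Definition Qc N (P : nat -> bool) t := (t == N.-1) || ~~ P t.

Lemma pop_seq N (P : nat -> bool) : (0 < N)%N ->
  [seq i.+1 | i <- iota 0 N.-1 & ~~ P i] ++ [:: N] =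
  [seq i.+1 | i <- iota 0 N & Qc N P i].
Proof.
move=> N0.
have -> : iota 0 N = iota 0 N.-1 ++ [:: N.-1] by rewrite -[in LHS](prednK N0) -addn1 iotaD.
rewrite filter_cat map_cat /= /Qc eqxx /= prednK //.
congr (_ ++ _); congr map; apply: eq_in_filter => t; rewrite mem_iota /= => ht.
by rewrite (_ : (t == N.-1) = false) //; apply/negbTE; rewrite neq_ltn ht.
Qed.

Lemma blk_pop N (P : nat -> bool) i : (0 < N)%N ->
  blk (part_of_pred N P) i = count (fun t => Qc N P t && (t < i)%N) (iota 0 N).
Proof.
move=> N0; rewrite /blk /part_of_pred pop_seq // psums_pairmap.
  rewrite count_map count_filter; apply: eq_count => t /=; exact: andbC.
rewrite (path_sortedE leq_trans); apply/andP; split; first by apply/allP.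
rewrite sorted_map; apply: sorted_filter; first exact: leq_trans.
apply: (sub_sorted _ (iota_sorted 0 N)) => a b /= h.
by rewrite ltnS.
Qed.

Lemma countS (Q : nat -> bool) N d : (d < N)%N ->
  count (fun t => Q t && (t < d.+1)%N) (iota 0 N) =
  (count (fun t => Q t && (t < d)%N) (iota 0 N) + Q d)%N.
Proof.
move=> dN.
have -> : N = (d + (N - d).-1.+1)%N by rewrite prednK ?subn_gt0 // subnKC // ltnW.
rewrite iotaD /= !count_cat /= add0n ltnSn ltnn andbT andbF add0n.
have -> : count (fun t => Q t && (t < d.+1)%N) (iota 0 d) =
          count (fun t => Q t && (t < d)%N) (iota 0 d).
  apply: eq_in_count => t; rewrite mem_iota add0n /= => ht.
  by rewrite ht ltnW.
have -> : count (fun t => Q t && (t < d.+1)%N) (iota d.+1 (N - d).-1) = 0%N.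
  apply/eqP; rewrite -leqn0 leqNgt -has_count; apply/hasP => [[t]].
  by rewrite mem_iota => /andP[h _] /andP[_ h']; move: h h'; lia.
have -> : count (fun t => Q t && (t < d)%N) (iota d.+1 (N - d).-1) = 0%N.
  apply/eqP; rewrite -leqn0 leqNgt -has_count; apply/hasP => [[t]].
  by rewrite mem_iota => /andP[h _] /andP[_ h']; move: h h'; lia.
lia.
Qed.

Lemma sameblk_pop N (P : nat -> bool) d : (d.+1 < N)%N ->
  sameblk (part_of_pred N P) d d.+1 = P d.
Proof.
move=> dN.
have N0 : (0 < N)%N by lia.
rewrite /sameblk !blk_pop // countS; last by lia.
rewrite -{1}[count _ _]addn0 eqn_add2l /Qc.
have -> : (d == N.-1) = false by apply/negbTE; lia.
by case: (P d).
Qed.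

Local Open Scope ring_scope.

Lemma klt_Wbar N (w : {perm 'I_N}) a c : klt (Wbar w) a c = (w a < w c)%N.
Proof. by rewrite /klt /Wbar /= !ffunE ltxx eqxx. Qed.

Lemma count_iota_mono (a : pred nat) p q : (p <= q)%N ->
  (count a (iota 0 p) <= count a (iota 0 q))%N.
Proof. by move=> pq; rewrite -(subnKC pq) iotaD count_cat leq_addr. Qed.

Lemma count_iotaS (a : pred nat) p :
  count a (iota 0 p.+1) = (count a (iota 0 p) + a p)%N.
Proof. by rewrite -addn1 iotaD count_cat /= add0n addn0. Qed.

Lemma X_facts N b (x : Welt N) : in_X b x ->
  [/\ (forall a c : 'I_N, (a < c)%N -> sameblk b a c -> (x.2 a < x.2 c)%N),
      (forall p q : 'I_N, (p <= q)%N -> x.1 p <= x.1 q) &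
      (forall p p' : 'I_N, (p' : nat) = (p : nat).+1 -> x.1 p = x.1 p' ->
          simple_in_compl b x.2 p = false)].
Proof.
case=> v [e [Hv [eta [Heta ->]] ->]] /=.
have etam : forall p q : 'I_N, (p <= q)%N -> eta p <= eta q.
  move=> p q; rewrite leq_eqVlt => /orP[/eqP e'|pq].
    by rewrite (val_inj e').
  by have := Heta _ _ pq; rewrite subr_le0.
split.
- move=> a c ac sb; rewrite -klt_Wbar; exact: LemA2 Hv a c ac sb.
- move=> p q pq; rewrite !ffunE; apply: lerD; first exact: etam.
  by rewrite lez_nat count_iota_mono.
- move=> p p' e'; rewrite !ffunE e' count_iotaS PoszD.
  have := etam p p'; rewrite e' leqnSn => /(_ isT).
  case: (simple_in_compl b v p) => //= h1 h2; lia.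
Qed.

Lemma squeeze N (m : 'I_N -> int) (p d q : 'I_N) :
  (forall p q : 'I_N, (p <= q)%N -> m p <= m q) ->
  (p <= d)%N -> (d <= q)%N -> m p = m q -> m d = m p.
Proof.
move=> Hm pd dq e; apply/eqP; rewrite eq_le (Hm p d pd) andbT e.
exact: Hm.
Qed.

Lemma LemK N b (x : Welt N) : in_X b x -> forall p q : 'I_N, (p <= q)%N ->
  x.1 p = x.1 q -> (blk b ((x.2^-1)%g q) <= blk b ((x.2^-1)%g p))%N.
Proof.
move=> HX; have [H1 H2 H3] := X_facts HX.
move=> p q pq epq.
apply: (@chain N (fun p q => blk b ((x.2^-1)%g q) <= blk b ((x.2^-1)%g p))%N).
- exact: pq.
- by move=> z /=.
- by move=> z y1 y3 /= h1 h2; exact: leq_trans h2 h1.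
move=> d d' e pd d'q /=.
have dd' : (d <= d')%N by rewrite e.
have ed : x.1 d = x.1 d'.
  rewrite (squeeze H2 pd (leq_trans dd' d'q) epq).
  by rewrite (squeeze H2 (leq_trans pd dd') d'q epq).
have hsc := H3 d d' e ed.
set a' := (x.2^-1)%g d; set c' := (x.2^-1)%g d'.
have nac : ~~ ((a' < c')%N && ~~ sameblk b a' c').
  apply/negP => /andP[h1 h2]; move/negbT/negP: hsc; apply.
  apply/existsP; exists a'; apply/existsP; exists c'.
  by rewrite h1 h2 /a' /c' !permKV e !eqxx.
case: (ltngtP a' c') => h.
- by move: nac; rewrite h /= negbK => /eqP ->.
- exact: blk_mono (ltnW h).
- have : d = d' by rewrite -(permKV x.2 d) -(permKV x.2 d') -/a' -/c' (val_inj h).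
  by move=> ee; move: e; rewrite ee; lia.
Qed.

Lemma Wmul_Wbar_l N (w : {perm 'I_N}) (x : Welt N) a :
  (Wmul (Wbar w) x).1 ((Wmul (Wbar w) x).2 a) = x.1 (x.2 a) /\
  (Wmul (Wbar w) x).2 a = w (x.2 a).
Proof. by rewrite /Wmul /Wbar /wact_wt /= !ffunE permM permK add0r. Qed.

Lemma part1 N b (x : Welt N) (w : {perm 'I_N}) :
  in_X b x -> in_Wbarup (beta_of b x) w -> in_Wup b (Wmul (Wbar w) x).
Proof.
move=> HX Hw; have [H1 H2 H3] := X_facts HX.
have Hw' := LemA2 Hw.
apply: LemA1 => a c ac sb.
rewrite /klt; have [-> ->] := Wmul_Wbar_l w x a; have [-> ->] := Wmul_Wbar_l w x c.
have va := H1 a c ac sb.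
have := H2 _ _ (ltnW va); rewrite le_eqVlt => /orP[/eqP e|->//].
rewrite e ltxx eqxx /=.
rewrite -klt_Wbar; apply: Hw' => //.
apply: (@chain N (fun p q => blk (beta_of b x) p == blk (beta_of b x) q)).
- exact: ltnW.
- by move=> z /=.
- by move=> z y1 y3 /eqP h1 /eqP h2; apply/eqP; rewrite h1 h2.
move=> d d' e0 pd d'q /=.
have e' : (d' : nat) = (d : nat).+1 := e0.
have dN : (d.+1 < N)%N by rewrite -e'.
have dd' : (d <= d')%N by rewrite e'.
rewrite e' /beta_of -/(sameblk _ d d.+1) sameblk_pop //.
have ed : x.1 d = x.1 (x.2 a) by rewrite (squeeze H2 pd (leq_trans dd' d'q) e).
have ed' : x.1 d' = x.1 (x.2 a) by rewrite (squeeze H2 (leq_trans pd dd') d'q e).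
set a' := (x.2^-1)%g d; set c' := (x.2^-1)%g d'.
have k1 : (blk b c' <= blk b a')%N by apply: LemK => //; rewrite ed ed'.
have k2 : (blk b a' <= blk b a)%N.
  by have := @LemK N b x HX (x.2 a) d pd (esym ed); rewrite permK.
have k3 : (blk b c <= blk b c')%N.
  have := @LemK N b x HX d' (x.2 c) d'q; rewrite permK; apply.
  by rewrite ed' e.
move: sb; rewrite /sameblk => /eqP sb.
have sb' : sameblk b a' c'.
  rewrite /sameblk eqn_leq; apply/andP; split=> //.
  by apply: leq_trans k2 _; rewrite sb; apply: leq_trans k3 _.
have ac' : (a' < c')%N.
  case: (ltngtP a' c') => // h.
    by have := H1 _ _ h; rewrite /sameblk eq_sym in sb'; move/(_ sb'); rewrite /a' /c' !permKV e'; lia.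
  have : d = d' by rewrite -(permKV x.2 d) -(permKV x.2 d') -/a' -/c' (val_inj h).
  by move=> ee; move: e'; rewrite ee; lia.
apply/existsP; exists a'; apply/existsP; exists c'.
rewrite ac' sb' /Wact /= /a' /c' !permKV e' !eqxx /=.
by rewrite ed ed' subrr.
Qed.


Lemma card_ltk N k : (k <= N)%N -> #|[set p : 'I_N | (p < k)%N]| = k.
Proof.
move=> kN.
have -> : [set p : 'I_N | (p < k)%N] = [set widen_ord kN i | i : 'I_k].
  apply/finset.setP => p; rewrite inE; apply/idP/imsetP => [h|[i _ ->]] /=.
    by exists (Ordinal h) => //; apply: val_inj.
  exact: ltn_ord.
by rewrite card_imset ?cardsT ?card_ord //; move=> i j /(congr1 val) /= h; exact: val_inj.
Qed.

Lemma card_perm_pre N (v : {perm 'I_N}) (P : pred 'I_N) :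
  #|[set c | P (v c)]| = #|[set p | P p]|.
Proof.
rewrite -(card_imset _ (@perm_inj _ v)); apply: eq_card => p; rewrite [in RHS]inE.
apply/imsetP/idP => [[c]|h]; first by rewrite inE => h ->.
by exists ((v^-1)%g p); rewrite ?inE permKV.
Qed.

Lemma mono_cnt N (f : 'I_N -> int) t (q : 'I_N) :
  (forall p q : 'I_N, (p <= q)%N -> f p <= f q) ->
  (f q < t) = (q < #|[set p | (f p < t)%R]|)%N.
Proof.
move=> Hm; apply/idP/idP => h.
  have : [set p : 'I_N | (p < q.+1)%N] \subset [set p | f p < t].
    apply/fintype.subsetP => p; rewrite !inE ltnS => pq.
    exact: le_lt_trans (Hm _ _ pq) h.
  by move/subset_leq_card; rewrite card_ltk ?ltn_ord.
apply/negPn/negP; rewrite -leNgt => h'.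
have sub : [set p | f p < t] \subset [set p : 'I_N | (p < q)%N].
  apply/fintype.subsetP => p; rewrite !inE => fp; rewrite ltnNge; apply/negP => qp.
  by have := lt_le_trans fp (le_trans h' (Hm _ _ qp)); rewrite ltxx.
have := subset_leq_card sub; rewrite card_ltk; last exact: ltnW (ltn_ord q). move=> h2.
by have := leq_trans h h2; rewrite ltnn.
Qed.

Lemma sorted_perm_eq N (m : 'I_N -> int) (s : {perm 'I_N}) :
  (forall p q : 'I_N, (p <= q)%N -> m p <= m q) ->
  (forall p q : 'I_N, (p <= q)%N -> m (s p) <= m (s q)) ->
  forall q, m (s q) = m q.
Proof.
move=> H1 H2 q.
have E : forall t, (m (s q) < t) = (m q < t).
  move=> t; rewrite (mono_cnt t q H1) (@mono_cnt N (fun p => m (s p)) t q H2).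
  by rewrite (card_perm_pre s (fun p => m p < t)).
apply/eqP; rewrite eq_le.
have h1 := E (m q + 1); rewrite !ltzD1 lexx in h1.
have h2 := E (m (s q) + 1); rewrite !ltzD1 lexx in h2.
by rewrite h1 -h2.
Qed.

Definition ordrel N b (g : 'I_N -> int) (a c : 'I_N) : bool :=
  (g a < g c) || ((g a == g c) &&
     ((blk b c < blk b a)%N || ((blk b a == blk b c) && (a < c)%N))).

Lemma v_char1 N b (x : Welt N) : in_X b x -> forall a c : 'I_N,
  (x.2 a < x.2 c)%N -> ordrel b (fun a => x.1 (x.2 a)) a c.
Proof.
move=> HX; have [H1 H2 H3] := X_facts HX => a c h.
rewrite /ordrel; have := H2 _ _ (ltnW h); rewrite le_eqVlt => /orP[/eqP e|->//].
rewrite e ltxx eqxx /=.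
have := LemK HX (ltnW h) e; rewrite !permK leq_eqVlt => /orP[/eqP eb|->//].
rewrite eb eqxx ltnn /=.
case: (ltngtP a c) => // h'.
  by have := H1 _ _ h'; rewrite /sameblk eb eqxx => /(_ isT); rewrite ltnNge ltnW.
by move: h; rewrite (val_inj h') ltnn.
Qed.

Lemma v_char N b (x : Welt N) : in_X b x -> forall a c : 'I_N,
  (x.2 a < x.2 c)%N = ordrel b (fun a => x.1 (x.2 a)) a c.
Proof.
move=> HX; have [H1 H2 H3] := X_facts HX => a c.
apply/idP/idP; first exact: v_char1.
rewrite /ordrel => /orP[h|/andP[/eqP e /orP[hb|/andP[/eqP eb ac]]]].
- rewrite ltnNge; apply/negP => h'.
  by have := lt_le_trans h (H2 _ _ h'); rewrite ltxx.
- rewrite ltnNge leq_eqVlt; apply/negP => /orP[/eqP h'|h'].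
    have ac : a = c by apply: (@perm_inj _ x.2); apply: val_inj.
    by move: hb; rewrite ac ltnn.
  have := v_char1 HX h'; rewrite /ordrel e ltxx eqxx /= => /orP[h2|/andP[/eqP h2 _]].
    by have := ltn_trans hb h2; rewrite ltnn.
  by move: hb; rewrite h2 ltnn.
- by apply: H1 => //; rewrite /sameblk eb.
Qed.

Lemma rank_perm N (v : {perm 'I_N}) a : (v a : nat) = #|[set c | (v c < v a)%N]|.
Proof.
by rewrite (card_perm_pre v (fun p => (p < v a)%N)) card_ltk //; exact: ltnW.
Qed.

Lemma part2 N b (x x' : Welt N) (w w' : {perm 'I_N}) :
  in_X b x -> in_X b x' -> Wmul (Wbar w) x = Wmul (Wbar w') x' -> x = x' /\ w = w'.
Proof.
move=> HX HX' E.
have G : forall a, x.1 (x.2 a) = x'.1 (x'.2 a).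
  move=> a; have [<- _] := Wmul_Wbar_l w x a; have [<- _] := Wmul_Wbar_l w' x' a.
  by rewrite E.
have [H1 H2 H3] := X_facts HX; have [H1' H2' H3'] := X_facts HX'.
have Em : forall q, x.1 q = x'.1 q.
  move=> q.
  pose s := ((x'.2^-1)%g * x.2)%g.
  have Es : forall q, x'.1 q = x.1 (s q).
    by move=> q'; rewrite /s permM -{1}(permKV x'.2 q') -G.
  rewrite Es; symmetry; apply: (@sorted_perm_eq N x.1 s) => // p q' pq; rewrite -!Es; exact: H2'.
have Ev : x.2 = x'.2.
  apply/permP => a; apply: val_inj; rewrite /= rank_perm [RHS]rank_perm.
  apply: eq_card => c; rewrite !inE (v_char HX) (v_char HX').
  have -> : (fun a => x.1 (x.2 a)) = (fun a => x'.1 (x'.2 a)) by apply: funext => z; exact: G.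
  by [].
have Ew : w = w'.
  have : (Wmul (Wbar w) x).2 = (Wmul (Wbar w') x').2 by rewrite E.
  by rewrite /Wmul /= Ev => /mulgI.
split => //.
case: x x' HX HX' G H1 H2 H3 H1' H2' H3' Em Ev E => [m v] [m' v'] /= *.
subst; congr pair; apply/ffunP => q; auto.
Qed.


Lemma ordrel_trans N b (g : 'I_N -> int) : transitive (ordrel b g).
Proof. move=> y x z; rewrite /ordrel; lia. Qed.

Lemma ordrel_irr N b (g : 'I_N -> int) a : ordrel b g a a = false.
Proof. rewrite /ordrel; lia. Qed.

Lemma ordrel_total N b (g : 'I_N -> int) a c : a != c -> ordrel b g a c || ordrel b g c a.
Proof.
move=> ac; have : (a : nat) != c by [].
rewrite /ordrel; lia.
Qed.

Definition rnk N b (g : 'I_N -> int) (a : 'I_N) : nat := #|[set c | ordrel b g c a]|.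

Lemma rnk_lt N b (g : 'I_N -> int) a : (rnk b g a < N)%N.
Proof.
rewrite /rnk -[X in (_ < X)%N]card_ord -cardsT; apply: proper_card; apply/properP; split.
  by apply/fintype.subsetP => z; rewrite inE.
by exists a; rewrite ?inE ?ordrel_irr.
Qed.

Lemma rnk_mono N b (g : 'I_N -> int) a c : ordrel b g a c -> (rnk b g a < rnk b g c)%N.
Proof.
move=> h; rewrite /rnk; apply: proper_card; apply/properP; split.
  apply/fintype.subsetP => z; rewrite !inE => hz; exact: ordrel_trans hz h.
by exists a; rewrite ?inE ?ordrel_irr.
Qed.

Lemma rnk_ltE N b (g : 'I_N -> int) a c : (rnk b g a < rnk b g c)%N = ordrel b g a c.
Proof.
apply/idP/idP; last exact: rnk_mono.
move=> h; case: (eqVneq a c) => [e|ac]; first by move: h; rewrite e ltnn.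
case/orP: (ordrel_total b g ac) => // h2.
by have := ltn_trans h (rnk_mono h2); rewrite ltnn.
Qed.

Lemma rnk_inj N b (g : 'I_N -> int) : injective (fun a => Ordinal (rnk_lt b g a)).
Proof.
move=> a c /(congr1 val) /= e; apply/eqP; apply/negP => /negP ac.
case/orP: (ordrel_total b g ac) => /rnk_mono; rewrite e ltnn //.
Qed.

Lemma part3 N b (y : Welt N) : in_Wup b y ->
  exists (x : Welt N) (w : {perm 'I_N}),
    [/\ in_X b x, in_Wbarup (beta_of b x) w & y = Wmul (Wbar w) x].
Proof.
case: y => nu pi Hy.
have Hk := LemA2 Hy.
pose g : 'I_N -> int := fun a => nu (pi a).
pose v := perm (@rnk_inj N b g).
have vE : forall a, (v a : nat) = rnk b g a by move=> a; rewrite permE.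
have vlt : forall a c, (v a < v c)%N = ordrel b g a c by move=> a c; rewrite !vE rnk_ltE.
pose mu : weight N := [ffun p => g ((v^-1)%g p)].
have muv : forall a, mu (v a) = g a by move=> a; rewrite ffunE permK.
pose w := ((v^-1)%g * pi)%g.
exists (mu, v), w.
have Ho : forall a c : 'I_N, (a < c)%N -> sameblk b a c -> ordrel b g a c.
  move=> a c ac sb; have := Hk a c ac sb; rewrite /klt /ordrel /= -/(g a) -/(g c).
  move: sb; rewrite /sameblk => /eqP ->; lia.
have mumono : forall p q : 'I_N, (p <= q)%N -> mu p <= mu q.
  move=> p q; rewrite leq_eqVlt => /orP[/eqP e|h]; first by rewrite (val_inj e).
  rewrite /mu !ffunE; move: h; rewrite -{1}(permKV v p) -{1}(permKV v q) vlt /ordrel; lia.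
split.
- exists v, mu; split => //.
  + apply: LemA1 => a c ac sb; rewrite klt_Wbar vlt; exact: Ho.
  exists [ffun k => mu k - eta_w b v k]; split; last by apply/ffunP => k; rewrite !ffunE subrK.
  move=> i j ij; rewrite subr_le0.
  pose eta0 : weight N := [ffun k => mu k - eta_w b v k].
  suff : eta0 i <= eta0 j by [].
  apply: (@chain N (fun i j => eta0 i <= eta0 j)).
  + exact: ltnW.
  + by move=> z /=.
  + by move=> z a c h1 h2; exact: le_trans h1 h2.
  move=> d d' e0 _ _.
  have e : (d' : nat) = (d : nat).+1 := e0.
  have dd' : (d <= d')%N by rewrite e.
  have hm := mumono d d' dd'.
  have hs : simple_in_compl b v d -> mu d < mu d'.
    move=> /existsP [a0 /existsP [c0 /and4P [h1 h2 /eqP h3 /eqP h4]]].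
    have ea : v a0 = d by apply: val_inj.
    have ec : v c0 = d' by apply: val_inj; rewrite /= h4 e.
    rewrite -ea -ec !muv.
    have := vlt a0 c0; rewrite ea ec e ltnSn => /esym; rewrite /ordrel.
    have := blk_mono b (ltnW h1).
    move: h2; rewrite /sameblk; lia.
  move: hm hs; rewrite /eta0 /mu !ffunE e count_iotaS PoszD.
  case: (simple_in_compl b v d) => /= hm hs; last lia.
  have := hs isT; lia.
- apply: LemA1 => p q pq sb; rewrite klt_Wbar.
  suff : (p == q) || (w p < w q)%N by case/orP => // /eqP e; move: pq; rewrite e ltnn.
  apply: (@chain N (fun p q => (p == q) || (w p < w q)%N)).
  + exact: ltnW.
  + by move=> z; rewrite eqxx.
  + move=> z a c /orP[/eqP->|h1] // /orP[/eqP<-|h2]; rewrite ?h1 ?(ltn_trans h1 h2) ?orbT //.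
  move=> d d' e0 pd d'q; apply/orP; right.
  have e : (d' : nat) = (d : nat).+1 := e0.
  have dN : (d.+1 < N)%N by rewrite -e.
  have sbd : sameblk (beta_of b (mu, v)) d d'.
    have h1 := blk_mono (beta_of b (mu, v)) pd.
    have h2 := blk_mono (beta_of b (mu, v)) (leqnSn d); rewrite -e in h2.
    have h3 := blk_mono (beta_of b (mu, v)) d'q.
    move: sb; rewrite /sameblk => /eqP sb.
    apply/eqP/anti_leq; rewrite h2 /=; rewrite sb in h1; exact: leq_trans h3 h1.
  move: sbd; rewrite /sameblk e -/(sameblk _ d d.+1) /beta_of sameblk_pop //.
  case/existsP => a' /existsP [c' /and3P [ac' sb' /and3P [/eqP h3 /eqP h4 /eqP h5]]].
  have ea : v a' = d by apply: val_inj.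
  have ec : v c' = d' by apply: val_inj; rewrite /= h4 e.
  rewrite /w !permM -ea -ec !permK.
  have := Hk a' c' ac' sb'; rewrite /klt /=.
  move: h5; rewrite /Wact /= !muv /g => /eqP; rewrite sub0r oppr_eq0 subr_eq0 => /eqP ->.
  by rewrite ltxx eqxx.
- rewrite /Wmul /Wbar /=; congr pair; last by rewrite /w mulKVg.
  apply/ffunP => p; by rewrite !ffunE add0r /w invMg invgK permM permK /g permKV.
Qed.


Local Close Scope ring_scope.

Theorem corollary2p18 (N : nat) (HN : (2 <= N)%N) (b : seq nat) (Hb : ordpart N b) :
  (forall x : Welt N, in_X b x ->
     forall w : {perm 'I_N}, in_Wbarup (beta_of b x) w ->
       in_Wup b (Wmul (Wbar w) x))
  /\
  (forall (x x' : Welt N) (w w' : {perm 'I_N}),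
     in_X b x -> in_Wbarup (beta_of b x) w ->
     in_X b x' -> in_Wbarup (beta_of b x') w' ->
     Wmul (Wbar w) x = Wmul (Wbar w') x' -> x = x' /\ w = w')
  /\
  (forall y : Welt N, in_Wup b y ->
     exists (x : Welt N) (w : {perm 'I_N}),
       [/\ in_X b x, in_Wbarup (beta_of b x) w & y = Wmul (Wbar w) x]).
Proof.
split; first by move=> x HX w Hw; exact: part1.
split; first by move=> x x' w w' HX _ HX' _ E; exact: part2 HX HX' E.
by move=> y Hy; exact: part3.
Qed.
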